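(* Let $\mu,\nu>0$; for integers $N>\max(\mu,\nu)$ let $v=\mu/N$, $w=\nu/N$, $S=\{0,\dots,N\}$ and \[ P_{ij}=(1-v)^{N-i}(1-w)^i\sum_{\substack{\ell,m\ge0:\ \ell-m=j-i}}\binom{N-i}{\ell}\binom{i}{m}\Big(\frac v{1-v}\Big)^\ell\Big(\frac w{1-w}\Big)^m. \] Let $g(z)=(\sqrt{\mu(1-z)}-\sqrt{\nu z})^2$ for $z\in[0,1]$. Then for all $i\in S$, \[ \sum_{j\in S}\sqrt{P_{ij}P_{ji}}\le e^{-g(i/N)}+\mathcal{O}(1/\sqrt N), \] where the $\mathcal{O}(1/\sqrt N)$ term depends on $\mu$ and $\nu$ but not on $i$ (i.e. there is $C=C(\mu,\nu)$ with the bound $e^{-g(i/N)}+C/\sqrt N$ for all such $N$ and all $i\in S$).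
   Context: $P_{ij}$ is the probability that a sequence in $\{0,1\}^N$ with $i$ ones, mutated independently at each site ($0\to1$ with probability $v$, $1\to0$ with probability $w$), ends up with $j$ ones. *)

(* Defs.v *)
From Stdlib Require Import Reals Lra.
Open Scope R_scope.

(* The mutation transition probability P_{ij} for N sites, with
   0->1 rate v and 1->0 rate w:
   P_ij = (1-v)^(N-i) (1-w)^i
          * sum_{l,m >= 0, l - m = j - i} C(N-i,l) C(i,m) (v/(1-v))^l (w/(1-w))^m.
   Binomials vanish for l > N-i or m > i, so the sum is over
   l in 0..N-i, m in 0..i with l - m = j - i (as integers). *)
Definition Pmut (N : nat) (v w : R) (i j : nat) : R :=
  (1 - v) ^ (N - i) * (1 - w) ^ i *
  sum_f_R0 (fun l =>
    sum_f_R0 (fun m =>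
      if Z.eqb (Z.of_nat l - Z.of_nat m) (Z.of_nat j - Z.of_nat i)
      then Binomial.C (N - i) l * Binomial.C i m
           * (v / (1 - v)) ^ l * (w / (1 - w)) ^ m
      else 0) i) (N - i).

Definition gfun (mu nu z : R) : R :=
  (sqrt (mu * (1 - z)) - sqrt (nu * z)) ^ 2.

(* Main.v *)
Require Import Defs.
From Stdlib Require Import Reals Lra Lia ZArith.
Open Scope R_scope.

Lemma sum_nonneg f n : (forall k, (k <= n)%nat -> 0 <= f k) -> 0 <= sum_f_R0 f n.
Proof.
  induction n; intros H; simpl.
  - apply H; lia.
  - assert (0 <= sum_f_R0 f n) by (apply IHn; intros; apply H; lia).
    assert (0 <= f (S n)) by (apply H; lia). lra.
Qed.

Lemma sum_swap (f : nat -> nat -> R) n m :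
  sum_f_R0 (fun a => sum_f_R0 (fun b => f a b) m) n =
  sum_f_R0 (fun b => sum_f_R0 (fun a => f a b) n) m.
Proof.
  induction n; simpl.
  - reflexivity.
  - rewrite IHn. rewrite <- plus_sum. reflexivity.
Qed.

Lemma sum_extend f n m : (n <= m)%nat -> (forall k, (k <= m)%nat -> 0 <= f k) ->
  sum_f_R0 f n <= sum_f_R0 f m.
Proof.
  intros Hnm H. induction m.
  - replace n with 0%nat by lia. lra.
  - destruct (Nat.eq_dec n (S m)) as [->|Hne]; [lra|].
    simpl. assert (sum_f_R0 f n <= sum_f_R0 f m) by (apply IHm; [lia| intros; apply H; lia]).
    assert (0 <= f (S m)) by (apply H; lia). lra.
Qed.

Lemma sum_prod f g L M :
  sum_f_R0 (fun l => sum_f_R0 (fun m => f l * g m) M) L = sum_f_R0 f L * sum_f_R0 g M.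
Proof.
  rewrite (Rmult_comm (sum_f_R0 f L)). rewrite scal_sum.
  apply sum_eq; intros l _. rewrite scal_sum.
  apply sum_eq; intros; ring.
Qed.

Lemma sum_zero (b : nat -> bool) c N : (forall j, (j <= N)%nat -> b j = false) ->
  sum_f_R0 (fun j => if b j then c j else 0) N = 0.
Proof.
  intros H. induction N; simpl.
  - rewrite H; auto.
  - rewrite IHN by (intros; apply H; lia). rewrite H; auto. lra.
Qed.

Lemma sum_unique (b : nat -> bool) c N : 0 <= c ->
  (forall j1 j2, b j1 = true -> b j2 = true -> j1 = j2) ->
  sum_f_R0 (fun j => if b j then c else 0) N <= c.
Proof.
  intros Hc Hu. induction N; simpl.
  - destruct (b 0%nat); lra.
  - destruct (b (S N)) eqn:E.
    + rewrite (sum_zero b (fun _ => c)). lra.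
      intros j Hj. destruct (b j) eqn:E2; auto.
      specialize (Hu _ _ E E2). lia.
    + lra.
Qed.

Lemma collapse (b : nat -> nat -> nat -> bool) (H : nat -> nat -> R) N L M :
  (forall l m, 0 <= H l m) ->
  (forall l m j1 j2, b j1 l m = true -> b j2 l m = true -> j1 = j2) ->
  sum_f_R0 (fun j => sum_f_R0 (fun l => sum_f_R0 (fun m =>
     if b j l m then H l m else 0) M) L) N <=
  sum_f_R0 (fun l => sum_f_R0 (fun m => H l m) M) L.
Proof.
  intros Hp Hu.
  rewrite sum_swap. apply sum_Rle; intros l _.
  rewrite sum_swap. apply sum_Rle; intros m _.
  apply (sum_unique (fun j => b j l m)); auto.
  intros; eapply Hu; eauto.
Qed.

Lemma C_nonneg n k : 0 <= Binomial.C n k.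
Proof.
  unfold Binomial.C. apply Rlt_le, Rdiv_lt_0_compat. apply INR_fact_lt_0.
  apply Rmult_lt_0_compat; apply INR_fact_lt_0.
Qed.

Lemma C_n0 n : Binomial.C n 0 = 1.
Proof. unfold Binomial.C. rewrite Nat.sub_0_r. simpl. field. apply Rgt_not_eq, INR_fact_lt_0. Qed.

Lemma C_nn n : Binomial.C n n = 1.
Proof. unfold Binomial.C. rewrite Nat.sub_diag. simpl. field. apply Rgt_not_eq, INR_fact_lt_0. Qed.

Lemma C_mono n d k : (k <= n)%nat -> Binomial.C n k <= Binomial.C (n + d) k.
Proof.
  intros Hk. induction d.
  - rewrite Nat.add_0_r. lra.
  - eapply Rle_trans; [apply IHd|].
    replace (n + S d)%nat with (S (n + d)) by lia.
    destruct k.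
    + rewrite !C_n0. lra.
    + rewrite <- pascal by lia. pose proof (C_nonneg (n+d) k). lra.
Qed.

Definition NB (p : R) (n L : nat) := sum_f_R0 (fun l => Binomial.C (n + l) l * p ^ l) L.

Lemma NB_rec p n L : NB p (S n) (S L) = NB p n (S L) + p * NB p (S n) L.
Proof.
  induction L.
  - unfold NB; simpl. rewrite !Nat.add_0_r.
    replace (S (n+1)) with (S (S n)) by lia.
    rewrite <- (pascal (S n) 0) by lia. rewrite !C_n0.
    replace (n+1)%nat with (S n) by lia. ring.
  - unfold NB in *.
    set (T := fun l => C (S n + l) l * p ^ l) in *.
    set (U := fun l => C (n + l) l * p ^ l) in *.
    assert (E: C (S n + S (S L)) (S (S L)) = C (n + S (S L)) (S L) + C (n + S (S L)) (S (S L))).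
    { replace (S n + S (S L))%nat with (S (n + S (S L))) by lia.
      rewrite <- pascal by lia. reflexivity. }
    assert (ET: T (S (S L)) = U (S (S L)) + p * T (S L)).
    { unfold T, U. rewrite E. replace (S n + S L)%nat with (n + S (S L))%nat by lia.
      simpl. ring. }
    assert (H1: sum_f_R0 T (S (S L)) = sum_f_R0 T (S L) + T (S (S L))) by reflexivity.
    assert (H2: sum_f_R0 U (S (S L)) = sum_f_R0 U (S L) + U (S (S L))) by reflexivity.
    assert (H3: sum_f_R0 T (S L) = sum_f_R0 T L + T (S L)) by reflexivity.
    rewrite H1, H2, ET. rewrite IHL at 1. rewrite H3. ring.
Qed.

Lemma NB_nonneg p n L : 0 <= p -> 0 <= NB p n L.
Proof. intros. unfold NB. apply sum_nonneg; intros. apply Rmult_le_pos; [apply C_nonneg| apply pow_le; auto]. Qed.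

Lemma NB_bound p n L : 0 <= p < 1 -> NB p n L <= / (1 - p) ^ (S n).
Proof.
  intros Hp. induction n.
  - unfold NB. simpl.
    rewrite (sum_eq _ (fun l => p ^ l)) by (intros; rewrite C_nn; ring).
    rewrite tech3 by lra.
    assert (0 <= p ^ S L) by (apply pow_le; lra).
    unfold Rdiv. replace ((1 - p) * 1) with (1 - p) by ring.
    assert (0 < / (1 - p)) by (apply Rinv_0_lt_compat; lra).
    nra.
  - assert (Hs: NB p (S n) L <= NB p n L + p * NB p (S n) L).
    { destruct L.
      - unfold NB. simpl sum_f_R0. rewrite !C_n0. simpl. lra.
      - rewrite NB_rec at 1. assert (NB p (S n) L <= NB p (S n) (S L)).
        { unfold NB. apply sum_extend; [lia|]. intros. apply Rmult_le_pos; [apply C_nonneg| apply pow_le; lra]. }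
        nra. }
    assert (Hq: 0 < (1 - p) ^ S n) by (apply pow_lt; lra).
    assert (NB p (S n) L * (1 - p) <= / (1 - p) ^ S n) by lra.
    replace (/ (1 - p) ^ S (S n)) with (/ (1 - p) ^ S n / (1 - p)) by (assert (0 < (1-p)^n) by (apply pow_lt; lra); simpl; field; lra).
    apply (Rmult_le_reg_r (1 - p)); [lra|]. unfold Rdiv. rewrite Rmult_assoc, Rinv_l by lra. lra.
Qed.

Lemma exp_pow x n : (exp x) ^ n = exp (INR n * x).
Proof.
  induction n.
  - simpl. rewrite Rmult_0_l, exp_0. reflexivity.
  - rewrite S_INR. simpl. rewrite IHn, <- exp_plus. f_equal. ring.
Qed.

Lemma pow_exp_bound x n : -1 <= x -> (1 + x) ^ n <= exp (INR n * x).
Proof.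
  intros. rewrite <- exp_pow. apply pow_incr. split; [lra| apply exp_ineq1_le].
Qed.

Lemma sqrt_amgm X Y t : 0 <= X -> 0 <= Y -> 0 < t -> sqrt (X * Y) <= (t * X + Y / t) / 2.
Proof.
  intros HX HY Ht.
  pose proof (sqrt_pos (X * Y)) as H0.
  pose proof (sqrt_sqrt (X * Y) ltac:(nra)) as H1.
  assert (2 * t * sqrt (X * Y) <= t * t * X + Y).
  { rewrite sqrt_mult by lra. pose proof (sqrt_sqrt X HX). pose proof (sqrt_sqrt Y HY).
    pose proof (pow2_ge_0 (t * sqrt X - sqrt Y)). nra. }
  apply (Rmult_le_reg_l (2 * t)); [lra|].
  replace (2 * t * ((t * X + Y / t) / 2)) with (t * t * X + Y) by (field; lra). lra.
Qed.

Lemma Rdiv_le_0_compat a b : 0 <= a -> 0 < b -> 0 <= a / b.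
Proof. intros. unfold Rdiv. apply Rmult_le_pos; [lra| apply Rlt_le, Rinv_0_lt_compat; lra]. Qed.

Lemma sum_scal_l c f n : sum_f_R0 (fun i => c * f i) n = c * sum_f_R0 f n.
Proof. rewrite scal_sum. apply sum_eq; intros; ring. Qed.

Lemma binom1 x n : sum_f_R0 (fun l => Binomial.C n l * x ^ l) n = (x + 1) ^ n.
Proof. rewrite binomial. apply sum_eq; intros. rewrite pow1. ring. Qed.

Lemma pow_ratio r j i l m : 0 < r -> (j + m = i + l)%nat -> r ^ j / r ^ i = r ^ l / r ^ m.
Proof.
  intros Hr E. assert (0 < r ^ i) by (apply pow_lt; lra). assert (0 < r ^ m) by (apply pow_lt; lra).
  assert (r ^ j * r ^ m = r ^ i * r ^ l) by (rewrite <- !pow_add, E; reflexivity).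
  apply (Rmult_eq_reg_r (r^i * r^m)); [| nra]. unfold Rdiv.
  replace (r^j * /r^i * (r^i*r^m)) with (r^j*r^m) by (field; lra).
  replace (r^l * / r^m * (r^i*r^m)) with (r^i*r^l) by (field; lra). exact H1.
Qed.

Lemma S1_bound N v w r i : 0 < v < 1 -> 0 < w < 1 -> 0 < r -> (i <= N)%nat ->
  sum_f_R0 (fun j => r ^ j / r ^ i * Pmut N v w i j) N <=
  (1 - v + v * r) ^ (N - i) * (1 - w + w / r) ^ i.
Proof.
  intros Hv Hw Hr HiN.
  set (c0 := (1 - v) ^ (N - i) * (1 - w) ^ i).
  set (X := fun l m => Binomial.C (N - i) l * Binomial.C i m * (v / (1 - v)) ^ l * (w / (1 - w)) ^ m).
  assert (HX: forall l m, 0 <= X l m).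
  { intros. unfold X. 
    pose proof (C_nonneg (N-i) l). pose proof (C_nonneg i m).
    assert (0 <= (v / (1 - v)) ^ l) by (apply pow_le; apply Rdiv_le_0_compat; lra).
    assert (0 <= (w / (1 - w)) ^ m) by (apply pow_le; apply Rdiv_le_0_compat; lra).
    assert (0 <= C (N - i) l * C i m) by (apply Rmult_le_pos; auto).
    assert (0 <= C (N - i) l * C i m * (v / (1 - v)) ^ l) by (apply Rmult_le_pos; auto).
    apply Rmult_le_pos; auto. }
  assert (Hc0: 0 < c0) by (unfold c0; apply Rmult_lt_0_compat; apply pow_lt; lra).
  eapply Rle_trans with (sum_f_R0 (fun j => sum_f_R0 (fun l => sum_f_R0 (fun m =>
     if Z.eqb (Z.of_nat l - Z.of_nat m) (Z.of_nat j - Z.of_nat i) then c0 * (r ^ l / r ^ m) * X l m else 0) i) (N - i)) N).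
  { apply sum_Rle; intros j Hj. unfold Pmut. fold c0.
    rewrite <- Rmult_assoc, scal_sum. apply sum_Rle; intros l Hl.
    rewrite (Rmult_comm (sum_f_R0 _ _)), scal_sum. apply sum_Rle; intros m Hm.
    destruct (Z.eqb _ _) eqn:E; [|lra].
    apply Z.eqb_eq in E. rewrite (pow_ratio r j i l m Hr) by lia.
    unfold X. right. ring. }
  eapply Rle_trans.
  { apply (collapse (fun j l m => Z.eqb (Z.of_nat l - Z.of_nat m) (Z.of_nat j - Z.of_nat i))
           (fun l m => c0 * (r ^ l / r ^ m) * X l m)).
    - intros. apply Rmult_le_pos; [apply Rmult_le_pos; [lra|]|apply HX].
      apply Rdiv_le_0_compat; [apply pow_le; lra| apply pow_lt; lra].
    - intros l m j1 j2 E1 E2. apply Z.eqb_eq in E1. apply Z.eqb_eq in E2. lia. }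
  right.
  rewrite (sum_eq _ (fun l => sum_f_R0 (fun m =>
     ((Binomial.C (N - i) l * (v * r / (1 - v)) ^ l) * (1 - v) ^ (N - i)) *
     ((Binomial.C i m * (w / r / (1 - w)) ^ m) * (1 - w) ^ i)) i)).
  2:{ intros l _. apply sum_eq; intros m _. unfold X, c0.
      unfold Rdiv. rewrite !Rpow_mult_distr, !pow_inv.
      assert (0 < r ^ m) by (apply pow_lt; lra).
      assert (0 < (1-v) ^ l) by (apply pow_lt; lra).
      assert (0 < (1-w) ^ m) by (apply pow_lt; lra).
      assert (0 < r ^ l) by (apply pow_lt; lra).
      field. repeat split; lra. }
  rewrite sum_prod. rewrite <- !scal_sum. rewrite !binom1.
  rewrite <- !Rpow_mult_distr. f_equal; f_equal; field; lra.
Qed.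

Lemma Pmut_nonneg N v w i j : 0 < v < 1 -> 0 < w < 1 -> 0 <= Pmut N v w i j.
Proof.
  intros Hv Hw. unfold Pmut. apply Rmult_le_pos.
  - apply Rmult_le_pos; apply pow_le; lra.
  - apply sum_nonneg; intros l _. apply sum_nonneg; intros m _.
    destruct (Z.eqb _ _); [|lra].
    pose proof (C_nonneg (N-i) l). pose proof (C_nonneg i m).
    assert (0 <= (v / (1 - v)) ^ l) by (apply pow_le; apply Rdiv_le_0_compat; lra).
    assert (0 <= (w / (1 - w)) ^ m) by (apply pow_le; apply Rdiv_le_0_compat; lra).
    assert (0 <= C (N - i) l * C i m) by (apply Rmult_le_pos; auto).
    assert (0 <= C (N - i) l * C i m * (v / (1 - v)) ^ l) by (apply Rmult_le_pos; auto).
    apply Rmult_le_pos; auto.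
Qed.

Lemma term_le_sum f n k : (k <= n)%nat -> (forall j, (j <= n)%nat -> 0 <= f j) -> f k <= sum_f_R0 f n.
Proof.
  intros Hk H. induction n.
  - replace k with 0%nat by lia. simpl. lra.
  - destruct (Nat.eq_dec k (S n)) as [->|Hne].
    + simpl. assert (0 <= sum_f_R0 f n) by (apply sum_nonneg; intros; apply H; lia). lra.
    + simpl. assert (f k <= sum_f_R0 f n) by (apply IHn; [lia| intros; apply H; lia]).
      assert (0 <= f (S n)) by (apply H; lia). lra.
Qed.

Lemma Pmut_le1 N v w i j : 0 < v < 1 -> 0 < w < 1 -> (i <= N)%nat -> (j <= N)%nat -> Pmut N v w i j <= 1.
Proof.
  intros Hv Hw Hi Hj.
  pose proof (S1_bound N v w 1 i Hv Hw ltac:(lra) Hi) as H.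
  replace (1 - v + v * 1) with 1 in H by ring. replace (1 - w + w / 1) with 1 in H by field.
  rewrite !pow1, Rmult_1_l in H.
  assert (Hs: sum_f_R0 (fun j => Pmut N v w i j) N <= 1).
  { eapply Rle_trans; [| exact H]. right. apply sum_eq; intros. rewrite !pow1. field. }
  eapply Rle_trans; [| exact Hs].
  apply (term_le_sum (fun j => Pmut N v w i j)); auto.
  intros. apply Pmut_nonneg; auto.
Qed.

Lemma S2_term v w r A B l m : 0 < v < 1 -> 0 < w < 1 -> 0 < r ->
  (v / (1 - v)) ^ l * (w / (1 - w)) ^ m * (r ^ (B + l) / r ^ (B + m) * ((1 - v) ^ (A + l) * (1 - w) ^ (B + m)))
  = (1 - v) ^ (A + m) * (1 - w) ^ (B + l) * (v * r / (1 - w)) ^ l * (w / r / (1 - v)) ^ m.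
Proof.
  intros Hv Hw Hr.
  unfold Rdiv. rewrite !pow_add, !Rpow_mult_distr, !pow_inv.
  assert (0 < r ^ m) by (apply pow_lt; lra).
  assert (0 < r ^ B) by (apply pow_lt; lra).
  assert (0 < (1-v) ^ l) by (apply pow_lt; lra).
  assert (0 < (1-w) ^ m) by (apply pow_lt; lra).
  assert (0 < (1-v) ^ m) by (apply pow_lt; lra).
  assert (0 < (1-w) ^ l) by (apply pow_lt; lra).
  field. repeat split; lra.
Qed.

Lemma S2_bound N v w r i : 0 < v < 1 -> 0 < w < 1 -> 0 < r -> (i <= N)%nat ->
  v * r / (1 - w) < 1 -> w / r / (1 - v) < 1 ->
  sum_f_R0 (fun j => r ^ i / r ^ j * Pmut N v w j i) N <=
  (1 - v) ^ (N - i) * (1 - w) ^ i * / (1 - v * r / (1 - w)) ^ (S (N - i))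
    * / (1 - w / r / (1 - v)) ^ (S i).
Proof.
  intros Hv Hw Hr HiN Hp Hq.
  set (p := v * r / (1 - w)) in *. set (q := w / r / (1 - v)) in *.
  assert (Hp0: 0 <= p) by (unfold p; apply Rdiv_le_0_compat; nra).
  assert (Hq0: 0 <= q) by (unfold q; apply Rdiv_le_0_compat; [apply Rdiv_le_0_compat|]; lra).
  set (c0 := (1 - v) ^ (N - i) * (1 - w) ^ i).
  assert (Hc0: 0 < c0) by (unfold c0; apply Rmult_lt_0_compat; apply pow_lt; lra).
  set (H := fun l m => c0 * (Binomial.C (N - i + l) l * p ^ l) * (Binomial.C (i + m) m * q ^ m)).
  assert (HH: forall l m, 0 <= H l m).
  { intros. unfold H. pose proof (C_nonneg (N - i + l) l). pose proof (C_nonneg (i + m) m).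
    assert (0 <= p ^ l) by (apply pow_le; lra). assert (0 <= q ^ m) by (apply pow_le; lra).
    apply Rmult_le_pos; [apply Rmult_le_pos|]; [lra| |]; apply Rmult_le_pos; auto. }
  eapply Rle_trans with (sum_f_R0 (fun j => sum_f_R0 (fun l => sum_f_R0 (fun m =>
     if Z.eqb (Z.of_nat l - Z.of_nat m) (Z.of_nat i - Z.of_nat j) then H l m else 0) N) N) N).
  { apply sum_Rle; intros j Hj. unfold Pmut.
    rewrite <- Rmult_assoc, scal_sum.
    eapply Rle_trans; [| apply sum_extend; [|intros; apply sum_nonneg; intros; destruct (Z.eqb _ _); [apply HH|lra]]].
    2: instantiate (1 := (N - j)%nat); lia.
    apply sum_Rle; intros l Hl.
    rewrite (Rmult_comm (sum_f_R0 _ _)), scal_sum.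
    eapply Rle_trans; [| apply sum_extend; [|intros; destruct (Z.eqb _ _); [apply HH|lra]]].
    2: instantiate (1 := j); lia.
    apply sum_Rle; intros m Hm.
    destruct (Z.eqb _ _) eqn:E; [|lra].
    apply Z.eqb_eq in E.
    assert (exists A, N - j = A + l)%nat as [A EA] by (exists (N - j - l)%nat; lia).
    assert (exists B, j = B + m)%nat as [B EB] by (exists (j - m)%nat; lia).
    assert (Ei: i = (B + l)%nat) by lia.
    assert (EA2: (N - i = A + m)%nat) by lia.
    unfold H, c0. rewrite EA, EA2. subst i j.
    pose proof (C_mono (A + l) m l ltac:(lia)) as C1.
    pose proof (C_mono (B + m) l m ltac:(lia)) as C2.
    replace (A + l + m)%nat with (A + m + l)%nat in C1 by lia.
    replace (B + m + l)%nat with (B + l + m)%nat in C2 by lia.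
    pose proof (S2_term v w r A B l m Hv Hw Hr) as ET. fold p q in ET.
    pose proof (C_nonneg (A + l) l). pose proof (C_nonneg (B + m) m).
    assert (0 <= p ^ l) by (apply pow_le; lra). assert (0 <= q ^ m) by (apply pow_le; lra).
    assert (0 <= (1 - v) ^ (A + m) * (1 - w) ^ (B + l)) by (apply Rmult_le_pos; apply pow_le; lra).
    set (K := (1 - v) ^ (A + m) * (1 - w) ^ (B + l)) in *.
    transitivity (C (A + l) l * C (B + m) m * (K * p ^ l * q ^ m)).
    { right. rewrite <- ET. ring. }
    assert (0 <= K * p ^ l * q ^ m) by (apply Rmult_le_pos; [apply Rmult_le_pos|]; auto).
    assert (C (A + l) l * C (B + m) m <= C (A + m + l) l * C (B + l + m) m).
    { apply Rmult_le_compat; auto. }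
    replace (K * (C (A + m + l) l * p ^ l) * (C (B + l + m) m * q ^ m))
      with (C (A + m + l) l * C (B + l + m) m * (K * p ^ l * q ^ m)) by ring.
    apply Rmult_le_compat_r; auto. }
  eapply Rle_trans.
  { apply (collapse (fun j l m => Z.eqb (Z.of_nat l - Z.of_nat m) (Z.of_nat i - Z.of_nat j)) H); auto.
    intros l m j1 j2 E1 E2. apply Z.eqb_eq in E1. apply Z.eqb_eq in E2. lia. }
  unfold H.
  rewrite sum_prod.
  rewrite sum_scal_l.
  fold c0. 
  pose proof (NB_bound p (N - i) N ltac:(lra)). pose proof (NB_bound q i N ltac:(lra)).
  pose proof (NB_nonneg p (N - i) N Hp0). pose proof (NB_nonneg q i N Hq0).
  unfold NB in *.
  rewrite Rmult_assoc, (Rmult_assoc c0). apply Rmult_le_compat_l; [lra|].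
  apply Rmult_le_compat; auto.
Qed.

Lemma G_bound n p w X A : 0 <= p <= 1/2 -> 0 <= w <= 1/2 -> 0 <= n -> X = n * p * (1 - w) ->
  X <= A -> (n + 1) * (p / (1 - p)) <= X + 2 * w * A + 2 * p + 4 * p * A.
Proof.
  intros Hp Hw Hn HX HA.
  assert (h1: p / (1 - p) <= p + 2 * p * p).
  { apply (Rmult_le_reg_r (1 - p)); [lra|]. unfold Rdiv. rewrite Rmult_assoc, Rinv_l by lra. nra. }
  assert (h2: n * p <= X + 2 * w * A).
  { assert (0 <= X) by (rewrite HX; apply Rmult_le_pos; [apply Rmult_le_pos|]; lra).
    assert (0 <= n * p) by nra. assert (0 <= w * (1 - 2 * w)) by nra.
    assert (0 <= (n * p) * (w * (1 - 2 * w))) by (apply Rmult_le_pos; lra).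
    assert (n * p * (1 - w) * (1 + 2 * w) >= n * p) by nra.
    assert (X * (1 + 2 * w) <= X + 2 * w * A) by nra.
    nra. }
  assert (0 <= n * p) by nra.
  assert (0 <= X) by (rewrite HX; apply Rmult_le_pos; [apply Rmult_le_pos|]; lra).
  assert (0 <= A) by lra.
  assert ((n + 1) * (p / (1 - p)) <= (n + 1) * (p + 2 * p * p)) by (apply Rmult_le_compat_l; lra).
  assert (2 * p * (n * p) <= 2 * p * (X + 2 * w * A)) by (apply Rmult_le_compat_l; lra).
  assert (2 * w * A <= A) by nra.
  assert (2 * p * (X + 2 * w * A) <= 4 * p * A) by nra.
  nra.
Qed.

Lemma exp_le_exp x y : x <= y -> exp x <= exp y.
Proof. intros [H|H]; [left; apply exp_increasing; auto| subst; lra]. Qed.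

Lemma exp_small x : 0 <= x <= 1/2 -> exp x <= 1 + 2 * x.
Proof.
  intros Hx. pose proof (exp_ineq1_le (- x)). 
  assert (exp x * exp (- x) = 1) by (rewrite <- exp_plus; replace (x + - x) with 0 by ring; apply exp_0).
  pose proof (exp_pos x). nra.
Qed.

Lemma final_step E g K s : 0 <= g -> 0 <= K * s <= 1/2 -> E <= - g + K * s ->
  exp E <= exp (- g) + 2 * K * s.
Proof.
  intros Hg HK HE.
  assert (exp E <= exp (- g + K * s)) by (apply exp_le_exp; lra).
  rewrite exp_plus in H. pose proof (exp_small (K * s) HK).
  assert (exp (- g) <= 1) by (rewrite <- exp_0; apply exp_le_exp; lra).
  pose proof (exp_pos (- g)). pose proof (exp_pos (K * s)). nra.
Qed.

Definition A1c mu nu := sqrt mu * (sqrt nu + 1).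
Definition A2c mu nu := sqrt nu * (sqrt mu + 1).
Definition P1c mu nu := 2 * mu * (sqrt nu + 1).
Definition Q1c mu nu := 2 * nu * (sqrt mu + 1).
Definition Kc mu nu := sqrt mu + sqrt nu + 2 * nu * A1c mu nu + 2 * P1c mu nu + 4 * P1c mu nu * A1c mu nu
  + 2 * mu * A2c mu nu + 2 * Q1c mu nu + 4 * Q1c mu nu * A2c mu nu.
Definition Dc mu nu := 1 + mu + nu + P1c mu nu + Q1c mu nu + Kc mu nu.
Definition s0c mu nu := / (2 * Dc mu nu).

Lemma consts_nonneg mu nu : 0 < mu -> 0 < nu ->
  0 <= A1c mu nu /\ 0 <= A2c mu nu /\ 0 <= P1c mu nu /\ 0 <= Q1c mu nu /\ 0 <= Kc mu nu /\ 1 <= Dc mu nu.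
Proof.
  intros. pose proof (sqrt_pos mu). pose proof (sqrt_pos nu).
  assert (0 <= A1c mu nu) by (unfold A1c; nra).
  assert (0 <= A2c mu nu) by (unfold A2c; nra).
  assert (0 <= P1c mu nu) by (unfold P1c; nra).
  assert (0 <= Q1c mu nu) by (unfold Q1c; nra).
  assert (0 <= Kc mu nu) by (unfold Kc; nra).
  unfold Dc. repeat split; lra.
Qed.

Lemma analytic mu nu s sa sb n0 n1 :
  0 < mu -> 0 < nu -> 0 < s -> s <= s0c mu nu -> 0 <= sa -> sa <= sqrt mu -> 0 <= sb -> sb <= sqrt nu ->
  0 <= n0 -> 0 <= n1 -> sa * sa = mu * s * s * n0 -> sb * sb = nu * s * s * n1 ->
  let v := mu * s * s in let w := nu * s * s in let r := (sb + s) / (sa + s) in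
  let p := v * r / (1 - w) in let q := w / r / (1 - v) in
  Kc mu nu * s <= 1/2 /\ 0 < r /\ p <= 1/2 /\ q <= 1/2 /\ v <= 1/2 /\ w <= 1/2 /\ 0 < v /\ 0 < w /\
  n0 * (v * (r - 1)) + n1 * (w * (/ r - 1)) <= - (sa - sb) ^ 2 + Kc mu nu * s /\
  n0 * (- v) + n1 * (- w) + (n0 + 1) * (p / (1 - p)) + (n1 + 1) * (q / (1 - q))
    <= - (sa - sb) ^ 2 + Kc mu nu * s.
Proof.
  intros Hmu Hnu Hs Hs0 Ha0 Ha1 Hb0 Hb1 Hn0 Hn1 Ea Eb v w r p q.
  destruct (consts_nonneg mu nu Hmu Hnu) as (HA1 & HA2 & HP1 & HQ1 & HK & HD).
  set (M1 := sqrt mu) in *. set (M2 := sqrt nu) in *.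
  assert (HM1: M1 * M1 = mu) by (apply sqrt_sqrt; lra).
  assert (HM2: M2 * M2 = nu) by (apply sqrt_sqrt; lra).
  assert (M1 >= 0) by (unfold M1; apply Rle_ge, sqrt_pos).
  assert (M2 >= 0) by (unfold M2; apply Rle_ge, sqrt_pos).
  assert (HsD: s * Dc mu nu <= 1/2).
  { unfold s0c in Hs0. apply (Rmult_le_compat_r (Dc mu nu)) in Hs0; [|lra].
    rewrite Rinv_mult, Rmult_assoc, Rinv_l in Hs0 by lra. lra. }
  unfold Dc in HsD.
  assert (0 <= s * mu) by nra. assert (0 <= s * nu) by nra.
  assert (0 <= s * P1c mu nu) by nra. assert (0 <= s * Q1c mu nu) by nra. assert (0 <= s * Kc mu nu) by nra.
  assert (HsD': s + s * mu + s * nu + s * P1c mu nu + s * Q1c mu nu + s * Kc mu nu <= 1/2) by (rewrite <- HsD; right; ring).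
  clear HsD.
  assert (Hs1: s <= 1/2) by lra.
  assert (Hmus: mu * s <= 1/2) by lra.
  assert (Hnus: nu * s <= 1/2) by lra.
  assert (HPs: P1c mu nu * s <= 1/2) by lra.
  assert (HQs: Q1c mu nu * s <= 1/2) by lra.
  assert (HKs: Kc mu nu * s <= 1/2) by lra.
  assert (0 < mu * s) by nra. assert (0 < nu * s) by nra.
  assert (Hv: 0 < v <= mu * s) by (unfold v; split; [apply Rmult_lt_0_compat; lra| assert (0 <= (mu * s) * (1 - s)) by (apply Rmult_le_pos; lra); nra]).
  assert (Hw: 0 < w <= nu * s) by (unfold w; split; [apply Rmult_lt_0_compat; lra| assert (0 <= (nu * s) * (1 - s)) by (apply Rmult_le_pos; lra); nra]).
  assert (Hr: 0 < r) by (unfold r; apply Rdiv_lt_0_compat; lra).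
  assert (Hr1: r * (sa + s) = sb + s) by (unfold r; field; lra).
  set (r' := / r).
  assert (Hr'0: 0 < r') by (apply Rinv_0_lt_compat; lra).
  assert (Hr2: r' * (sb + s) = sa + s) by (unfold r'; rewrite <- Hr1; field; lra).
  assert (F1: sa * sa * r <= sa * (sb + s)).
  { rewrite <- Hr1. assert (0 <= s * sa * r) by (apply Rmult_le_pos; [apply Rmult_le_pos|]; lra). lra. }
  assert (F2: sb * sb * r' <= sb * (sa + s)).
  { rewrite <- Hr2. assert (0 <= s * sb * r') by (apply Rmult_le_pos; [apply Rmult_le_pos|]; lra). lra. }
  assert (F3: s * r <= sb + s).
  { rewrite <- Hr1. assert (0 <= sa * r) by (apply Rmult_le_pos; lra). lra. }
  assert (F4: s * r' <= sa + s).
  { rewrite <- Hr2. assert (0 <= sb * r') by (apply Rmult_le_pos; lra). lra. }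
  assert (HAr: sa * sa * r <= A1c mu nu) by (unfold A1c; fold M1 M2; nra).
  assert (HBr: sb * sb * r' <= A2c mu nu) by (unfold A2c; fold M1 M2; nra).
  assert (Hvr: v * r <= mu * s * (M2 + 1)) by (unfold v; nra).
  assert (Hwr: w * r' <= nu * s * (M1 + 1)) by (unfold w; nra).
  assert (Hp: 0 <= p <= P1c mu nu * s).
  { unfold p. split. apply Rdiv_le_0_compat; nra.
    apply (Rmult_le_reg_r (1 - w)); [lra|]. unfold Rdiv. rewrite Rmult_assoc, Rinv_l by lra.
    unfold P1c. fold M2.
    assert (0 <= mu * s * (M2 + 1) * (1 - 2 * w)) by (apply Rmult_le_pos; [apply Rmult_le_pos|]; lra).
    lra. }
  assert (Hq: 0 <= q <= Q1c mu nu * s).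
  { unfold q. split. apply Rdiv_le_0_compat; [apply Rdiv_le_0_compat|]; lra.
    apply (Rmult_le_reg_r (1 - v)); [lra|]. unfold Rdiv. rewrite Rmult_assoc, Rinv_l by lra.
    fold r'. unfold Q1c. fold M1.
    assert (0 <= nu * s * (M1 + 1) * (1 - 2 * v)) by (apply Rmult_le_pos; [apply Rmult_le_pos|]; lra).
    lra. }
  assert (E1: n0 * (v * (r - 1)) + n1 * (w * (r' - 1)) <= - (sa - sb) ^ 2 + (M1 + M2) * s).
  { replace (n0 * (v * (r - 1)) + n1 * (w * (r' - 1))) with (sa * sa * r - sa * sa + sb * sb * r' - sb * sb)
      by (unfold v, w; rewrite Ea, Eb; ring).
    assert (sa * s <= M1 * s) by (apply Rmult_le_compat_r; lra).
    assert (sb * s <= M2 * s) by (apply Rmult_le_compat_r; lra).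
    lra. }
  assert (GP := G_bound n0 p w (sa * sa * r) (A1c mu nu) ltac:(lra) ltac:(lra) Hn0).
  assert (GP' : (n0 + 1) * (p / (1 - p)) <= sa * sa * r + 2 * w * A1c mu nu + 2 * p + 4 * p * A1c mu nu).
  { apply GP; [|lra]. unfold p. rewrite Ea. unfold v. field. lra. }
  assert (GQ := G_bound n1 q v (sb * sb * r') (A2c mu nu) ltac:(lra) ltac:(lra) Hn1).
  assert (GQ' : (n1 + 1) * (q / (1 - q)) <= sb * sb * r' + 2 * v * A2c mu nu + 2 * q + 4 * q * A2c mu nu).
  { apply GQ; [|lra]. unfold q. rewrite Eb. unfold w, r'. field. split; lra. }
  assert (w * A1c mu nu <= nu * s * A1c mu nu) by (apply Rmult_le_compat_r; lra).
  assert (v * A2c mu nu <= mu * s * A2c mu nu) by (apply Rmult_le_compat_r; lra).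
  assert (p * A1c mu nu <= P1c mu nu * s * A1c mu nu) by (apply Rmult_le_compat_r; lra).
  assert (q * A2c mu nu <= Q1c mu nu * s * A2c mu nu) by (apply Rmult_le_compat_r; lra).
  assert (Ev: n0 * v = sa * sa) by (unfold v; rewrite Ea; ring).
  assert (Ew: n1 * w = sb * sb) by (unfold w; rewrite Eb; ring).
  assert (0 <= nu * A1c mu nu * s) by (apply Rmult_le_pos; [apply Rmult_le_pos|]; lra).
  assert (0 <= mu * A2c mu nu * s) by (apply Rmult_le_pos; [apply Rmult_le_pos|]; lra).
  assert (0 <= P1c mu nu * A1c mu nu * s) by (apply Rmult_le_pos; [apply Rmult_le_pos|]; lra).
  assert (0 <= Q1c mu nu * A2c mu nu * s) by (apply Rmult_le_pos; [apply Rmult_le_pos|]; lra).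
  assert (0 <= P1c mu nu * s) by (apply Rmult_le_pos; lra).
  assert (0 <= Q1c mu nu * s) by (apply Rmult_le_pos; lra).
  assert (HKe: Kc mu nu * s = (M1 + M2) * s + 2 * (nu * A1c mu nu * s) + 2 * (P1c mu nu * s)
     + 4 * (P1c mu nu * A1c mu nu * s) + 2 * (mu * A2c mu nu * s) + 2 * (Q1c mu nu * s)
     + 4 * (Q1c mu nu * A2c mu nu * s)) by (unfold Kc; fold M1 M2; ring).
  assert (Hlin: n0 * (- v) + n1 * (- w) = - (sa * sa) - sb * sb) by lra.
  assert (Hlin2: n0 * (v * (r - 1)) + n1 * (w * (r' - 1)) = sa * sa * r - sa * sa + sb * sb * r' - sb * sb)
      by (unfold v, w; rewrite Ea, Eb; ring).
  repeat split; try lra.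
Qed.

Lemma inv_pow_exp p k : 0 <= p < 1 -> / (1 - p) ^ k <= exp (INR k * (p / (1 - p))).
Proof.
  intros Hp. rewrite <- pow_inv.
  replace (/ (1 - p)) with (1 + p / (1 - p)) by (field; lra).
  apply pow_exp_bound. assert (0 <= p / (1 - p)) by (apply Rdiv_le_0_compat; lra). lra.
Qed.

Lemma large_case mu nu N i : 0 < mu -> 0 < nu -> mu < INR N -> nu < INR N -> (i <= N)%nat ->
  / sqrt (INR N) <= s0c mu nu ->
  sum_f_R0 (fun j =>
          sqrt (Pmut N (mu / INR N) (nu / INR N) i j *
                Pmut N (mu / INR N) (nu / INR N) j i)) N
      <= exp (- gfun mu nu (INR i / INR N)) + 2 * Kc mu nu * / sqrt (INR N).
Proof.
  intros Hmu Hnu HmuN HnuN HiN Hs0.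
  assert (HN: 0 < INR N) by lra.
  set (s := / sqrt (INR N)) in *.
  assert (Hsq: 0 < sqrt (INR N)) by (apply sqrt_lt_R0; lra).
  assert (Hs: 0 < s) by (apply Rinv_0_lt_compat; lra).
  assert (Hss: s * s = / INR N).
  { unfold s. rewrite <- Rinv_mult, sqrt_sqrt; lra. }
  assert (Ev: mu / INR N = mu * s * s) by (rewrite Rmult_assoc, Hss; reflexivity).
  assert (Ew: nu / INR N = nu * s * s) by (rewrite Rmult_assoc, Hss; reflexivity).
  rewrite Ev, Ew.
  set (z := INR i / INR N).
  assert (Hi: INR i <= INR N) by (apply le_INR; lia).
  assert (Hi0: 0 <= INR i) by apply pos_INR.
  assert (Hz: 0 <= z <= 1).
  { unfold z. split. apply Rdiv_le_0_compat; lra.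
    apply (Rmult_le_reg_r (INR N)); [lra|]. unfold Rdiv. rewrite Rmult_assoc, Rinv_l by lra. lra. }
  set (sa := sqrt (mu * (1 - z))). set (sb := sqrt (nu * z)).
  assert (Ha0: 0 <= sa) by apply sqrt_pos. assert (Hb0: 0 <= sb) by apply sqrt_pos.
  assert (Ha1: sa <= sqrt mu) by (apply sqrt_le_1_alt; nra).
  assert (Hb1: sb <= sqrt nu) by (apply sqrt_le_1_alt; nra).
  set (n0 := INR (N - i)). set (n1 := INR i).
  assert (Hn0e: n0 = INR N - INR i) by (apply minus_INR; lia).
  assert (Hn0: 0 <= n0) by apply pos_INR.
  assert (Ea: sa * sa = mu * s * s * n0).
  { unfold sa. rewrite sqrt_sqrt by nra. replace (mu * s * s * n0) with (mu * (s * s) * n0) by ring.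
    rewrite Hss, Hn0e. unfold z. field. lra. }
  assert (Eb: sb * sb = nu * s * s * n1).
  { unfold sb. rewrite sqrt_sqrt by nra. replace (nu * s * s * n1) with (nu * (s * s) * n1) by ring.
    rewrite Hss. unfold z, n1. field. lra. }
  pose proof (analytic mu nu s sa sb n0 n1 Hmu Hnu Hs Hs0 Ha0 Ha1 Hb0 Hb1 Hn0 Hi0 Ea Eb) as AN.
  cbv zeta in AN.
  set (v := mu * s * s) in *. set (w := nu * s * s) in *. set (r := (sb + s) / (sa + s)) in *.
  destruct AN as (HKs2 & Hr & Hp & Hq & Hv2 & Hw2 & Hv0 & Hw0 & HE1 & HE2).
  set (p := v * r / (1 - w)) in *. set (q := w / r / (1 - v)) in *.
  assert (Hvv: 0 < v < 1) by lra. assert (Hww: 0 < w < 1) by lra.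
  assert (Hp0: 0 <= p) by (unfold p; apply Rdiv_le_0_compat; [apply Rmult_le_pos|]; lra).
  assert (Hq0: 0 <= q) by (unfold q; apply Rdiv_le_0_compat; [apply Rdiv_le_0_compat|]; lra).
  eapply Rle_trans with (sum_f_R0 (fun j => (r ^ j / r ^ i * Pmut N v w i j + r ^ i / r ^ j * Pmut N v w j i) / 2) N).
  { apply sum_Rle; intros j Hj.
    assert (0 < r ^ j) by (apply pow_lt; lra). assert (0 < r ^ i) by (apply pow_lt; lra).
    eapply Rle_trans; [apply (sqrt_amgm _ _ (r ^ j / r ^ i)); try apply Pmut_nonneg; auto; apply Rdiv_lt_0_compat; auto|].
    right. f_equal. f_equal. field. lra. }
  rewrite (sum_eq (fun j => (r ^ j / r ^ i * Pmut N v w i j + r ^ i / r ^ j * Pmut N v w j i) / 2) (fun j => / 2 * (r ^ j / r ^ i * Pmut N v w i j) + / 2 * (r ^ i / r ^ j * Pmut N v w j i)))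
.
  2: { intros k Hk. assert (0 < r ^ k) by (apply pow_lt; lra). assert (0 < r ^ i) by (apply pow_lt; lra). field. lra. }
  rewrite plus_sum, !sum_scal_l.
  pose proof (S1_bound N v w r i Hvv Hww Hr HiN) as S1.
  assert (Hp1: p < 1) by lra. assert (Hq1: q < 1) by lra.
  pose proof (S2_bound N v w r i Hvv Hww Hr HiN Hp1 Hq1) as S2. fold p q in S2.
  set (E1 := n0 * (v * (r - 1)) + n1 * (w * (/ r - 1))) in *.
  set (E2 := n0 * (- v) + n1 * (- w) + (n0 + 1) * (p / (1 - p)) + (n1 + 1) * (q / (1 - q))) in *.
  assert (B1: (1 - v + v * r) ^ (N - i) * (1 - w + w / r) ^ i <= exp E1).
  { unfold E1. rewrite exp_plus.
    replace (1 - v + v * r) with (1 + v * (r - 1)) by ring.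
    replace (1 - w + w / r) with (1 + w * (/ r - 1)) by (field; lra).
    assert (0 < /r) by (apply Rinv_0_lt_compat; lra).
    apply Rmult_le_compat.
    - apply pow_le. nra.
    - apply pow_le. nra.
    - apply pow_exp_bound. nra.
    - apply pow_exp_bound. nra. }
  assert (B2: (1 - v) ^ (N - i) * (1 - w) ^ i * / (1 - p) ^ S (N - i) * / (1 - q) ^ S i <= exp E2).
  { unfold E2. rewrite !exp_plus.
    assert (X1: (1 - v) ^ (N - i) <= exp (n0 * - v)) by (replace (1 - v) with (1 + - v) by ring; apply pow_exp_bound; lra).
    assert (X2: (1 - w) ^ i <= exp (n1 * - w)) by (replace (1 - w) with (1 + - w) by ring; apply pow_exp_bound; lra).
    assert (X3: / (1 - p) ^ S (N - i) <= exp ((n0 + 1) * (p / (1 - p)))).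
    { replace (n0 + 1) with (INR (S (N - i))) by (rewrite S_INR; reflexivity). apply inv_pow_exp; lra. }
    assert (X4: / (1 - q) ^ S i <= exp ((n1 + 1) * (q / (1 - q)))).
    { replace (n1 + 1) with (INR (S i)) by (rewrite S_INR; reflexivity). apply inv_pow_exp; lra. }
    assert (0 <= (1 - v) ^ (N - i)) by (apply pow_le; lra).
    assert (0 <= (1 - w) ^ i) by (apply pow_le; lra).
    assert (0 <= / (1 - p) ^ S (N - i)) by (apply Rlt_le, Rinv_0_lt_compat, pow_lt; lra).
    assert (0 <= / (1 - q) ^ S i) by (apply Rlt_le, Rinv_0_lt_compat, pow_lt; lra).
    apply Rmult_le_compat; [| | |exact X4]; try lra.
    - repeat apply Rmult_le_pos; lra.
    - apply Rmult_le_compat; [| | |exact X3]; try lra.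
      + apply Rmult_le_pos; lra.
      + apply Rmult_le_compat; auto. }
  assert (Hg: gfun mu nu z = (sa - sb) ^ 2) by reflexivity.
  rewrite Hg.
  assert (Hg0: 0 <= (sa - sb) ^ 2) by (apply pow2_ge_0).
  destruct (consts_nonneg mu nu Hmu Hnu) as (_ & _ & _ & _ & HK & _).
  assert (HKs: 0 <= Kc mu nu * s <= 1/2).
  { split. apply Rmult_le_pos; lra.
    exact HKs2. }
  pose proof (final_step E1 _ _ _ Hg0 HKs HE1).
  pose proof (final_step E2 _ _ _ Hg0 HKs HE2).
  lra.
Qed.

Theorem proposition5 (mu nu : R) (hmu : 0 < mu) (hnu : 0 < nu) :
  exists C : R,
    forall N : nat, mu < INR N -> nu < INR N ->
    forall i : nat, (i <= N)%nat ->
      sum_f_R0 (fun j =>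
          sqrt (Pmut N (mu / INR N) (nu / INR N) i j *
                Pmut N (mu / INR N) (nu / INR N) j i)) N
      <= exp (- gfun mu nu (INR i / INR N)) + C / sqrt (INR N).
Proof.
  destruct (consts_nonneg mu nu hmu hnu) as (_ & _ & _ & _ & HK & HD).
  set (s0 := s0c mu nu).
  assert (Hs0: 0 < s0) by (unfold s0, s0c; apply Rinv_0_lt_compat; lra).
  exists (Rmax (2 * Kc mu nu) ((/ (s0 * s0) + 1) / s0)).
  intros N HmuN HnuN i HiN.
  assert (HN: 0 < INR N) by lra.
  assert (Hsq: 0 < sqrt (INR N)) by (apply sqrt_lt_R0; lra).
  set (s := / sqrt (INR N)).
  assert (Hs: 0 < s) by (apply Rinv_0_lt_compat; lra).
  assert (Hss: s * s = / INR N).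
  { unfold s. rewrite <- Rinv_mult, sqrt_sqrt; lra. }
  assert (Hdiv: forall x, x / sqrt (INR N) = x * s) by (intros; reflexivity).
  rewrite Hdiv.
  destruct (Rle_lt_dec s s0) as [Hle|Hlt].
  - eapply Rle_trans; [apply large_case; auto|]. change (/ sqrt (INR N)) with s.
    assert (2 * Kc mu nu <= Rmax (2 * Kc mu nu) ((/ (s0 * s0) + 1) / s0)) by apply Rmax_l.
    assert (2 * Kc mu nu * s <= Rmax (2 * Kc mu nu) ((/ (s0 * s0) + 1) / s0) * s)
      by (apply Rmult_le_compat_r; lra).
    lra.
  - assert (Hv: 0 < mu / INR N < 1).
    { split. apply Rdiv_lt_0_compat; lra. apply (Rmult_lt_reg_r (INR N)); [lra|].
      unfold Rdiv. rewrite Rmult_assoc, Rinv_l by lra. lra. }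
    assert (Hw: 0 < nu / INR N < 1).
    { split. apply Rdiv_lt_0_compat; lra. apply (Rmult_lt_reg_r (INR N)); [lra|].
      unfold Rdiv. rewrite Rmult_assoc, Rinv_l by lra. lra. }
    eapply Rle_trans with (sum_f_R0 (fun _ => 1) N).
    { apply sum_Rle; intros j Hj. rewrite <- sqrt_1. apply sqrt_le_1_alt.
      pose proof (Pmut_le1 N _ _ i j Hv Hw HiN Hj). pose proof (Pmut_le1 N _ _ j i Hv Hw Hj HiN).
      pose proof (Pmut_nonneg N _ _ i j Hv Hw). pose proof (Pmut_nonneg N _ _ j i Hv Hw).
      nra. }
    rewrite sum_cte, S_INR, Rmult_1_l.
    assert (HNs: INR N = / (s * s)) by (rewrite Hss, Rinv_inv; reflexivity).
    assert (/ (s * s) <= / (s0 * s0)) by (apply Rinv_le_contravar; nra).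
    assert ((/ (s0 * s0) + 1) / s0 <= Rmax (2 * Kc mu nu) ((/ (s0 * s0) + 1) / s0)) by apply Rmax_r.
    assert (/ (s0 * s0) + 1 <= (/ (s0 * s0) + 1) / s0 * s) .
    { unfold Rdiv. rewrite Rmult_assoc. 
      assert (1 < / s0 * s).
      { apply (Rmult_lt_reg_l s0); [lra|]. rewrite <- Rmult_assoc, Rinv_r by lra. lra. }
      assert (0 < / (s0 * s0)) by (apply Rinv_0_lt_compat; nra). nra. }
    assert ((/ (s0 * s0) + 1) / s0 * s <= Rmax (2 * Kc mu nu) ((/ (s0 * s0) + 1) / s0) * s)
      by (apply Rmult_le_compat_r; lra).
    pose proof (exp_pos (- gfun mu nu (INR i / INR N))).
    lra.
Qed.
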